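(* Assume the perfect setting (the pretrained LLM coincides with the conditional distribution $\mathtt{LLM}$ induced by the pretraining distribution $\mathbb{P}_{\mathcal{D}}$ described in the context, and the Reporter's translator coincides with the true emission $\mathbb{O}$). Then for all $(h,t)\in[H]\times[T]$, the LLM's recommended policy $\pi^t_{h,\mathtt{LLM}}(\cdot\mid\tau_h^t,\omega^t):=\mathtt{LLM}(\cdot\mid \mathtt{pt}_h^t)$ satisfies $$\pi^t_{h,\mathtt{LLM}}(\cdot\mid\tau_h^t,\omega^t)=\sum_{z\in\mathcal{Z}}\pi^*_{z,h}(\cdot\mid\tau_h^t,\omega^t)\cdot\mathbb{P}_{\mathcal{D}}(z\mid\mathtt{pt}_h^t),$$ where $\mathtt{pt}_h^t=\mathcal{H}_t\cup\{\omega^t,\tau_h^t\}$ and $\mathbb{P}_{\mathcal{D}}(z\mid \mathtt{pt}_h^t)$ is the posterior of $z$ given the prompt under $\mathbb{P}_{\mathcal{D}}$.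
   Context: High-level model: a finite set $\mathcal{Z}$ of latent variables; state space $\mathcal{S}$, observation space $\mathcal{O}$, subgoal space $\mathcal{G}$, task space $\Omega$, horizon $H\in\mathbb{N}$. For each $z\in\mathcal{Z}$ there are transition kernels $\mathbb{P}_{z,h}(s'\mid s,g)$, $h\in[H]$; a common emission distribution $\mathbb{O}(o\mid s)$; an initial state distribution $\rho$; rewards $r_h(o,\omega)\in[0,1]$. A trajectory up to step $h$ is $\tau_h=(o_1,g_1,\dots,o_{h-1},g_{h-1},o_h)$. A policy is $\pi=\{\pi_h\}_{h\in[H]}$ with $\pi_h:(\mathcal{O}\times\mathcal{G})^{h-1}\times\mathcal{O}\times\Omega\to\Delta(\mathcal{G})$; under $z$ and task $\omega$: $s_1\sim\rho$, $o_h\sim\mathbb{O}(\cdot\mid s_h)$, $g_h\sim\pi_h(\cdot\mid\tau_h,\omega)$, $s_{h+1}\sim\mathbb{P}_{z,h}(\cdot\mid s_h,g_h)$. The value is $\mathcal{J}_z(\pi,\omega)=\mathbb{E}[\sum_{h=1}^H r_h(o_h,\omega)]$ and $\pi^*_z(\omega)\in\arg\max_\pi\mathcal{J}_z(\pi,\omega)$ is an optimal policy with step-$h$ components $\pi^*_{z,h}(\cdot\mid\tau_h,\omega)$. Pretraining distribution: given priors $\mathcal{P}_{\mathcal{Z}}$ on $\mathcal{Z}$, $\mathcal{P}_\Omega$ on $\Omega$, a behavior policy $\pi^b$ and $T_{\rm p}\in\mathbb{N}$, a data point $D=\{z\}\cup\{\omega^t,\tau_H^t,g^{t,*}_{1:H},s^t_{1:H}\}_{t\in[T_{\rm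 p}]}$ has joint law $$\mathbb{P}_{\mathcal{D}}(D)=\mathcal{P}_{\mathcal{Z}}(z)\prod_{t=1}^{T_{\rm p}}\mathcal{P}_\Omega(\omega^t)\prod_{h=1}^{H}\pi^*_{z,h}(g^{t,*}_h\mid\tau_h^t,\omega^t)\,\mathbb{O}(o_h^t\mid s_h^t)\,\pi^b_h(g_h^t\mid\tau_h^t,\omega^t)\,\mathbb{P}_{z,h}(s^t_{h+1}\mid s_h^t,g_h^t)$$ (the expert labels $g^{t,*}_h$ do not influence the trajectory). The LLM is trained on the token sequences $(\omega^t,o_1^t,g_1^t,\dots,o_H^t)_{t}$ where at each subgoal position the target token is the expert label $g_h^{t,*}$; the (perfect) $\mathtt{LLM}(\cdot\mid S)$ is the conditional distribution under $\mathbb{P}_{\mathcal{D}}$ of the next target token given the preceding token sequence $S$ (with $z$ unobserved). In episode $t$ of deployment, $\mathcal{H}_t=\{\omega^i,\tau_H^i\}_{i=1}^{t-1}$ is the history of previous tasks and full trajectories, and the prompt at step $h$ is $\mathtt{pt}_h^t=\mathcal{H}_t\cup\{\omega^t,\tau_h^t\}$. *)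

(* Defs.v *)
From HB Require Import structures.
From mathcomp Require Import all_boot all_order all_algebra.
Set Implicit Arguments. Unset Strict Implicit. Unset Printing Implicit Defensive.
Import Order.TTheory GRing.Theory Num.Theory.
Local Open Scope ring_scope.

Section Model.
Variable R : realFieldType.
(* latent variables, states, observations, subgoals, tasks *)
Variables (Z S O G W : finType).
(* horizon H (steps indexed by 'I_H) and number of pretraining episodes Tp *)
Variables (H Tp : nat).

Definition is_dist (T : finType) (p : T -> R) :=
  (forall x, 0 <= p x) /\ \sum_(x : T) p x = 1.

(* policy: pi h past o w g = pi_h(g | tau_h = (past, o), w),
   past = (o_1,g_1,...,o_{h-1},g_{h-1}) *)
Definition policy := 'I_H -> seq (O * G) -> O -> W -> G -> R.
Definition is_policy (pi : policy) :=
  forall h past o w, is_dist (pi h past o w).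

Definition past (o : {ffun 'I_H -> O}) (g : {ffun 'I_H -> G}) (h : 'I_H)
  : seq (O * G) :=
  map (fun i => (o i, g i)) (filter (fun i : 'I_H => (i < h)%N) (enum 'I_H)).

Definition prev_ord (i : 'I_H) : option 'I_H :=
  if (0 < i)%N then insub (i.-1) else None.

Variables (rho : S -> R) (Ptr : Z -> 'I_H -> S -> G -> S -> R) (Ob : S -> O -> R).

Definition state_factor (z : Z) (s : {ffun 'I_H -> S}) (g : {ffun 'I_H -> G})
  (h : 'I_H) : R :=
  match prev_ord h with
  | None => rho (s h)
  | Some j => Ptr z j (s j) (g j) (s h)
  end.

Definition epi_prob (z : Z) (pi : policy) (w : W) (s : {ffun 'I_H -> S})
  (o : {ffun 'I_H -> O}) (g : {ffun 'I_H -> G}) : R :=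
  \prod_(h : 'I_H)
     (state_factor z s g h * Ob (s h) (o h) * pi h (past o g h) (o h) w (g h)).

Variable r : 'I_H -> O -> W -> R.

Definition J (z : Z) (pi : policy) (w : W) : R :=
  \sum_(s : {ffun 'I_H -> S}) \sum_(o : {ffun 'I_H -> O})
   \sum_(g : {ffun 'I_H -> G})
     epi_prob z pi w s o g * \sum_(h : 'I_H) r h (o h) w.

Variables (PZ : Z -> R) (PW : W -> R) (pib : policy) (pistar : Z -> policy).

(* a pretraining data point D = (z, w^t, o^t_h, g^t_h, g^{t,*}_h, s^t_h) *)
Definition data : finType :=
  (Z * ({ffun 'I_Tp -> W} * ({ffun 'I_Tp -> {ffun 'I_H -> O}} *
   ({ffun 'I_Tp -> {ffun 'I_H -> G}} * ({ffun 'I_Tp -> {ffun 'I_H -> G}} *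
    {ffun 'I_Tp -> {ffun 'I_H -> S}})))))%type.

Definition dz (d : data) : Z := d.1.
Definition dw (d : data) : {ffun 'I_Tp -> W} := d.2.1.
Definition dob (d : data) : {ffun 'I_Tp -> {ffun 'I_H -> O}} := d.2.2.1.
Definition dg (d : data) : {ffun 'I_Tp -> {ffun 'I_H -> G}} := d.2.2.2.1.
Definition dgs (d : data) : {ffun 'I_Tp -> {ffun 'I_H -> G}} := d.2.2.2.2.1.
Definition ds (d : data) : {ffun 'I_Tp -> {ffun 'I_H -> S}} := d.2.2.2.2.2.

Definition PD (d : data) : R :=
  PZ (dz d) *
  \prod_(t : 'I_Tp)
    (PW (dw d t) * epi_prob (dz d) pib (dw d t) (ds d t) (dob d t) (dg d t) *
     \prod_(h : 'I_H)
        pistar (dz d) h (past (dob d t) (dg d t) h) (dob d t h) (dw d t)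
               (dgs d t h)).

Definition PrD (E : pred data) : R := \sum_(d : data | E d) PD d.

(* the event that the data point's token sequence starts with the prompt
   pt_h^t = {w^i, tau_H^i}_{i<t} u {w^t, tau_h^t}, the prompt being read off
   the arrays (wp, op, gp) *)
Definition prompt_ev (t : 'I_Tp) (h : 'I_H) (wp : {ffun 'I_Tp -> W})
  (op : {ffun 'I_Tp -> {ffun 'I_H -> O}}) (gp : {ffun 'I_Tp -> {ffun 'I_H -> G}})
  : pred data := fun d =>
  [&& [forall i : 'I_Tp, (i <= t)%N ==> (dw d i == wp i)],
      [forall i : 'I_Tp, (i < t)%N ==> ((dob d i == op i) && (dg d i == gp i))],
      [forall j : 'I_H, (j < h)%N ==>
          ((dob d t j == op t j) && (dg d t j == gp t j))]
    & dob d t h == op t h].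

(* the perfect LLM: conditional law under P_D of the next target token
   (the expert label g^{t,*}_h) given the prompt *)
Definition LLM t h wp op gp (g : G) : R :=
  PrD [pred d | prompt_ev t h wp op gp d && (dgs d t h == g)] /
  PrD (prompt_ev t h wp op gp).

Definition posterior t h wp op gp (z : Z) : R :=
  PrD [pred d | prompt_ev t h wp op gp d && (dz d == z)] /
  PrD (prompt_ev t h wp op gp).

End Model.

(* Main.v *)
Require Import Defs.
From HB Require Import structures.
From mathcomp Require Import all_boot all_order all_algebra.
Import Order.TTheory GRing.Theory Num.Theory.
Local Open Scope ring_scope.

Lemma prod_if1 (R : realFieldType) (I : finType) (j : I) (x : R) :
  \prod_(i : I) (if i == j then x else 1) = x.
Proof. by rewrite -big_mkcond big_pred1_eq. Qed.

Lemma prod_split (R : realFieldType) (I J : finType) (b : I -> R)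
  (a : I -> J -> R) (t : I) (h : J) :
  \prod_(i : I) (b i * \prod_(j : J) a i j) =
  a t h * \prod_(i : I) (b i * \prod_(j : J)
            (if (i == t) && (j == h) then 1 else a i j)).
Proof.
transitivity (\prod_(i : I) (b i * ((if i == t then a t h else 1) *
   \prod_(j : J) (if (i == t) && (j == h) then 1 else a i j)))).
  apply: eq_bigr => i _; congr (_ * _).
  transitivity (\prod_(j : J) ((if (i == t) && (j == h) then a i j else 1) *
      (if (i == t) && (j == h) then 1 else a i j))).
    by apply: eq_bigr => j _; case: ifP; rewrite ?mulr1 ?mul1r.
  rewrite big_split /=; congr (_ * _).
  case: (eqVneq i t) => [->|_] /=; first by rewrite -big_mkcond big_pred1_eq.
  by rewrite big1.
under eq_bigr do rewrite mulrCA.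
by rewrite big_split /= prod_if1.
Qed.

Lemma past_eq {O G : finType} {H : nat} (o o' : {ffun 'I_H -> O})
  (g g' : {ffun 'I_H -> G}) (h : 'I_H) :
  (forall j : 'I_H, (j < h)%N -> o j = o' j /\ g j = g' j) ->
  past o g h = past o' g' h.
Proof.
move=> Hj; rewrite /past; apply/eq_in_map => i; rewrite mem_filter.
by case/andP => hi _; case: (Hj i hi) => -> ->.
Qed.

Definition swapv (G : finType) (g g' x : G) : G :=
  if x == g then g' else if x == g' then g else x.
Arguments swapv {G}.

Lemma swapvK {G : finType} (g g' : G) : involutive (swapv g g').
Proof.
move=> x; rewrite /swapv.
case: (eqVneq x g) => [->|xg]; first by rewrite eqxx; case: eqVneq.
case: (eqVneq x g') => [->|xg']; first by rewrite eqxx.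
by rewrite (negbTE xg) (negbTE xg').
Qed.

Lemma swapv_eq {G : finType} (g g' x : G) : (swapv g g' x == g') = (x == g).
Proof.
rewrite /swapv; have [xg|xg] := eqVneq x g; first by rewrite eqxx.
have [xg'|xg'] := eqVneq x g' => /=; first by rewrite -xg' eq_sym (negbTE xg).
exact: negbTE.
Qed.

Theorem proposition1 (R : realFieldType) (Z S O G W : finType) (H Tp : nat)
  (rho : S -> R) (Ptr : Z -> 'I_H -> S -> G -> S -> R) (Ob : S -> O -> R)
  (r : 'I_H -> O -> W -> R)
  (PZ : Z -> R) (PW : W -> R) (pib : policy R O G W H)
  (pistar : Z -> policy R O G W H) :
  is_dist rho ->
  (forall z h s g, is_dist (Ptr z h s g)) ->
  (forall s, is_dist (Ob s)) ->
  (forall h o w, 0 <= r h o w <= 1) ->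
  is_dist PZ -> is_dist PW ->
  is_policy pib ->
  (forall z, is_policy (pistar z)) ->
  (* pi*_z(w) is an optimal policy for (z, w) *)
  (forall z w (pi : policy R O G W H), is_policy pi ->
     J rho Ptr Ob r z pi w <= J rho Ptr Ob r z (pistar z) w) ->
  forall (t : 'I_Tp) (h : 'I_H) (wp : {ffun 'I_Tp -> W})
         (op : {ffun 'I_Tp -> {ffun 'I_H -> O}})
         (gp : {ffun 'I_Tp -> {ffun 'I_H -> G}}),
  0 < PrD rho Ptr Ob PZ PW pib pistar (prompt_ev t h wp op gp) ->
  forall g : G,
    LLM rho Ptr Ob PZ PW pib pistar t h wp op gp g =
    \sum_(z : Z) pistar z h (past (op t) (gp t) h) (op t h) (wp t) g *
                 posterior rho Ptr Ob PZ PW pib pistar t h wp op gp z.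
Proof.
move=> _ _ _ _ _ _ _ Hpi _ t h wp op gp _ g.
pose E := @prompt_ev Z S O G W H Tp t h wp op gp.
pose PDd := @PD R Z S O G W H Tp rho Ptr Ob PZ PW pib pistar.
pose a (d : data Z S O G W H Tp) := fun (t' : 'I_Tp) (h' : 'I_H) =>
  pistar (dz d) h' (past (dob d t') (dg d t') h') (dob d t' h') (dw d t') (dgs d t' h').
pose Q (d : data Z S O G W H Tp) := PZ (dz d) * \prod_(t' : 'I_Tp)
  (PW (dw d t') * epi_prob rho Ptr Ob (dz d) pib (dw d t') (ds d t') (dob d t') (dg d t') *
   \prod_(h' : 'I_H) (if (t' == t) && (h' == h) then 1 else a d t' h')).
have PDQ d : PDd d = a d t h * Q d.
  rewrite /PDd /PD (@prod_split _ _ _ (fun t' => PW (dw d t') * epi_prob rho Ptr Ob (dz d) pib (dw d t') (ds d t') (dob d t') (dg d t')) (a d) t h).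
  by rewrite mulrCA.
pose upd (k : G -> G) (d : data Z S O G W H Tp) : data Z S O G W H Tp :=
  (d.1, (d.2.1, (d.2.2.1, (d.2.2.2.1, ([ffun t' => [ffun h' =>
     if (t' == t) && (h' == h) then k (dgs d t' h') else dgs d t' h']],
     d.2.2.2.2.2))))).
have updgs k d : dgs (upd k d) t h = k (dgs d t h) by rewrite /dgs /= !ffunE !eqxx.
have updQ k d : Q (upd k d) = Q d.
  rewrite /Q /=; congr (_ * _); apply: eq_bigr => t' _; congr (_ * _).
  apply: eq_bigr => h' _; case: ifP => // hne.
  by rewrite /a /dgs /= !ffunE hne.
have updK g1 g2 : involutive (upd (swapv g1 g2)).
  case=> [z [w [o [g0 [gs s]]]]]; rewrite /upd /=; congr (_, (_, (_, (_, (_, _))))).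
  apply/ffunP => t'; apply/ffunP => h'; rewrite !ffunE /dgs /=.
  by case: ifP => hc; rewrite hc ?swapvK.
pose piz z g' := pistar z h (past (op t) (gp t) h) (op t h) (wp t) g'.
pose Sg z g' := \sum_(d | (E d && (dz d == z)) && (dgs d t h == g')) Q d.
have SgE z g' : Sg z g' = Sg z g.
  rewrite /Sg (reindex_inj (can_inj (updK g g'))).
  apply: eq_big => [d|d _]; last exact: updQ.
  by rewrite updgs swapv_eq.
have NE z g' : \sum_(d | (E d && (dz d == z)) && (dgs d t h == g')) PDd d
    = piz z g' * Sg z g'.
  rewrite /Sg mulr_sumr; apply: eq_bigr => d /andP [/andP [Ed /eqP dzz] /eqP dgg].
  rewrite PDQ; congr (_ * _); rewrite /a /piz dzz dgg.
  case/and4P: Ed => /forallP Hw /forallP Ho /forallP Hj /eqP ->.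
  have := Hw t; rewrite leqnn /= => /eqP ->.
  congr (pistar _ _ _ _ _ _); apply: past_eq => j hj.
  by have := Hj j; rewrite hj /= => /andP [/eqP -> /eqP ->].
have TE z : \sum_(d | E d && (dz d == z)) PDd d = Sg z g.
  rewrite (partition_big (fun d => dgs d t h) predT) //=.
  under eq_bigr do rewrite NE SgE.
  rewrite -mulr_suml.
  by have [_ ->] := Hpi z h (past (op t) (gp t) h) (op t h) (wp t); rewrite mul1r.
rewrite /LLM /posterior /PrD /=.
rewrite (partition_big (fun d => dz d) predT) //= mulr_suml.
apply: eq_bigr => z _.
rewrite -/PDd -/E TE mulrA; congr (_ / _).
rewrite -NE; apply: eq_bigl => d; by rewrite andbAC.
Qed.
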